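(* Let $H$ be a bipartite graph and let $k_1 = \min \max(|A|,|B|)$ and $k_2 = \min \min(|A|,|B|)$, where both minima range over all partitions $(A,B)$ of $V(H)$ into two independent sets. Assume $k_2 \ge 2$. Let $G$ be an $n$-vertex graph with chromatic number $\chi$ and independence number $\alpha$. If $k_2 \ge 3$, then $$\chi_H(G) \le \min\left\{ \frac{n}{k_1-1} + \frac{k_1-2}{k_1-1}\chi,\ \frac{n}{k_2-1}\left(1 - \frac{1}{\chi}\right) + \frac{k_2-2}{k_2-1}(\chi - 1) + 1 \right\}.$$ If $k_2 = 2$, then $$\chi_H(G) \le \min\left\{ \frac{n}{k_1-1} + \frac{k_1-2}{k_1-1}\chi,\ n - \alpha + 1 \right\}.$$
   Context: All graphs are finite and simple. For a fixed bipartite graph $H$, a proper vertex coloring of a graph $G$ is called an $H$-avoiding coloring if for any two color classes, the subgraph of $G$ induced by their union contains no induced subgraph isomorphic to $H$. $\chi_H(G)$ denotes the minimum number of colors in an $H$-avoiding coloring of $G$. *)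

(* Defs.v *)
From mathcomp Require Import all_boot all_order all_algebra.
Set Implicit Arguments. Unset Strict Implicit. Unset Printing Implicit Defensive.

Definition simple_graph (T : finType) (e : rel T) : Prop :=
  symmetric e /\ irreflexive e.

Definition indep (T : finType) (e : rel T) (S : {set T}) : bool :=
  [forall x in S, forall y in S, ~~ e x y].

Definition bipartition (U : finType) (eH : rel U) (A : {set U}) : bool :=
  indep eH A && indep eH (~: A).

Definition bipartite (U : finType) (eH : rel U) : Prop :=
  exists A : {set U}, bipartition eH A.

Definition k1 (U : finType) (eH : rel U) : nat :=
  \big[minn/#|U|]_(A : {set U} | bipartition eH A) maxn #|A| #|~: A|.

Definition k2 (U : finType) (eH : rel U) : nat :=
  \big[minn/#|U|]_(A : {set U} | bipartition eH A) minn #|A| #|~: A|.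

Definition has_induced_copy (T U : finType) (e : rel T) (eH : rel U)
  (S : {set T}) : bool :=
  [exists f : {ffun U -> T},
     [&& injectiveb f, [forall u, f u \in S] &
         [forall u, forall v, eH u v == e (f u) (f v)]]].

Definition proper_coloring (T : finType) (e : rel T) (k : nat)
  (c : {ffun T -> 'I_k}) : bool :=
  [forall x, forall y, e x y ==> (c x != c y)].

Definition color_class (T : finType) (k : nat) (c : {ffun T -> 'I_k})
  (i : 'I_k) : {set T} := [set x | c x == i].

Definition H_avoiding (T U : finType) (e : rel T) (eH : rel U) (k : nat)
  (c : {ffun T -> 'I_k}) : bool :=
  proper_coloring e c &&
  [forall i : 'I_k, forall j : 'I_k,
     (i != j) ==> ~~ has_induced_copy e eH (color_class c i :|: color_class c j)].

(* chi_H(G): minimum number of colours of an H-avoiding colouring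
   (a colouring with #|T| colours always suffices in the setting of the theorem). *)
Definition chiH (T U : finType) (e : rel T) (eH : rel U) : nat :=
  \big[minn/#|T|]_(k < #|T|.+1 |
      [exists c : {ffun T -> 'I_k}, H_avoiding e eH c]) (k : nat).

Definition chromatic (T : finType) (e : rel T) : nat :=
  \big[minn/#|T|]_(k < #|T|.+1 |
      [exists c : {ffun T -> 'I_k}, proper_coloring e c]) (k : nat).

Definition alpha (T : finType) (e : rel T) : nat :=
  \max_(S : {set T} | indep e S) #|S|.

(* Main.v *)
Require Import Defs.
From mathcomp Require Import all_boot all_order all_algebra zify ring lra.
Import Order.TTheory GRing.Theory Num.Theory.

Lemma bigmin_mem (I : finType) (P : pred I) (F : I -> nat) d :
  \big[minn/d]_(i | P i) F i = d \/ exists2 i, P i & \big[minn/d]_(i | P i) F i = F i.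
Proof.
apply: (big_rec (fun x => x = d \/ exists2 i, P i & x = F i)); first by left.
move=> i x Pi [->|[j Pj ->]]; rewrite /minn; case: ifP => _.
- by right; exists i.
- by left.
- by right; exists i.
- by right; exists j.
Qed.

Lemma bigmin_le (I : finType) (P : pred I) (F : I -> nat) d i :
  P i -> (\big[minn/d]_(i | P i) F i <= F i)%N.
Proof.
move=> Pi; have : i \in index_enum I by rewrite mem_index_enum.
elim: (index_enum I) => [//|j r IH]; rewrite inE big_cons.
case/orP=> [/eqP<-|ir]; first by rewrite Pi geq_minl.
by case: ifP => _; [apply: leq_trans (geq_minr _ _) (IH ir)|apply: IH].
Qed.

Lemma bigmin_led (I : finType) (P : pred I) (F : I -> nat) d :
  (\big[minn/d]_(i | P i) F i <= d)%N.
Proof. by apply: (big_rec (fun x => x <= d)%N) => // i x _ hx; lia. Qed.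

Section S.
Variables (T U : finType) (e : rel T) (eH : rel U).

Lemma k2_le_k1 : (k2 eH <= k1 eH)%N.
Proof.
apply: (big_ind2 (fun x y => x <= y)%N) => //.
- by move=> *; lia.
- by move=> *; lia.
Qed.

Lemma chiH_leT : (chiH e eH <= #|T|)%N.
Proof. exact: bigmin_led. Qed.

Lemma chiH_le_col k (c : {ffun T -> 'I_k}) : H_avoiding e eH c -> (chiH e eH <= k)%N.
Proof.
move=> Hc; case: (leqP k #|T|) => hk.
- have hk' : (k < #|T|.+1)%N by [].
  rewrite /chiH.
  have := @bigmin_le _ (fun i : 'I_#|T|.+1 => [exists c : {ffun T -> 'I_i}, H_avoiding e eH c])
    (fun i => nat_of_ord i) #|T| (Ordinal hk'); apply.
  by apply/existsP; exists c.
- by apply: leq_trans chiH_leT (ltnW hk).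
Qed.


Lemma indepP (V : finType) (r : rel V) (S : {set V}) :
  reflect (forall x y, x \in S -> y \in S -> ~~ r x y) (indep r S).
Proof.
apply: (iffP idP).
- by move=> /forallP H x y xS yS; move: (H x); rewrite xS /= => /forallP /(_ y); rewrite yS.
- move=> H; apply/forallP=> x; apply/implyP=> xS; apply/forallP=> y; apply/implyP=> yS.
  exact: H.
Qed.

Lemma copy_bip (P Q : {set T}) : indep e P -> indep e Q ->
  has_induced_copy e eH (P :|: Q) ->
  exists A, [/\ bipartition eH A, (#|A| <= #|P|)%N & (#|~: A| <= #|Q|)%N].
Proof.
move=> /indepP iP /indepP iQ /existsP[f /and3P[/injectiveP finj /forallP fS /forallP fE]].
have fQ u : f u \notin P -> f u \in Q.
  by move: (fS u); rewrite inE => /orP[->|].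
have eE u v : eH u v = e (f u) (f v) by apply/eqP; exact: (forallP (fE u) v).
exists [set u | f u \in P]; split.
- apply/andP; split; apply/indepP => u v; rewrite ?inE => hu hv; rewrite eE.
  + exact: iP.
  + exact: iQ (fQ _ hu) (fQ _ hv).
- rewrite -(card_imset _ finj); apply: subset_leq_card; apply/subsetP => x.
  by case/imsetP => u; rewrite inE => hu ->.
- rewrite -(card_imset _ finj); apply: subset_leq_card; apply/subsetP => x.
  by case/imsetP => u; rewrite !inE => hu ->; apply: fQ.
Qed.

Lemma k_bounds A : bipartition eH A ->
  (k2 eH <= minn #|A| #|~: A|)%N /\ (k1 eH <= maxn #|A| #|~: A|)%N.
Proof.
move=> hA; split.
- exact: (@bigmin_le _ (fun A => bipartition eH A) (fun A => minn #|A| #|~: A|) #|U| A).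
- exact: (@bigmin_le _ (fun A => bipartition eH A) (fun A => maxn #|A| #|~: A|) #|U| A).
Qed.

Lemma L (D : finType) (d : T -> D) :
  (forall x y, e x y -> d x != d y) ->
  (forall a b, a != b -> ~~ has_induced_copy e eH ([set x | d x == a] :|: [set x | d x == b])) ->
  (chiH e eH <= #|[set d x | x : T]|)%N.
Proof.
move=> hp ha; case: (pickP T) => [x0 _ | T0]; last first.
  apply: leq_trans (chiH_leT) _.
  by rewrite (@eq_card0 T T) // => x; move: (T0 x).
set A := [set d x | x : T].
have x0A : d x0 \in A by apply: imset_f.
have dA x : d x \in A by apply: imset_f.
pose c := [ffun x => enum_rank_in x0A (d x)].
have cE x i : (c x == i) = (d x == enum_val i).
  rewrite ffunE; apply/eqP/eqP => [<-|->]; first by rewrite enum_rankK_in.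
  by rewrite enum_valK_in.
apply: (@chiH_le_col _ c); apply/andP; split.
- apply/forallP=> x; apply/forallP=> y; apply/implyP=> exy.
  apply: contra (hp _ _ exy) => /eqP cxy.
  by rewrite -(enum_rankK_in x0A (dA x)) -(enum_rankK_in x0A (dA y)) -!(ffunE (fun x => enum_rank_in x0A (d x))) -/c cxy.
- apply/forallP=> i; apply/forallP=> j; apply/implyP=> ij.
  have -> : color_class c i :|: color_class c j =
     [set x | d x == enum_val i] :|: [set x | d x == enum_val j].
    by apply/setP=> x; rewrite !inE !cE.
  by apply: ha; rewrite (inj_eq enum_val_inj).
Qed.

End S.

Lemma sum_lt N M : (\sum_(j < N) ((j : nat) < M : nat) = minn N M)%N.
Proof.
elim: N => [|N IH]; first by rewrite big_ord0 min0n.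
rewrite big_ord_recr /= IH; case: (ltnP N M) => h /=; lia.
Qed.

Section P.
Variables (T : finType) (e : rel T) (k : nat) (c : {ffun T -> 'I_k}) (s : 'I_k -> nat).
Hypothesis s_pos : forall i, (0 < s i)%N.
Hypothesis cprop : proper_coloring e c.

Let C i := [set x | c x == i].
Let idx x := index x (enum (C (c x))).
Let q x := (idx x %/ s (c x))%N.
Definition dP x : 'I_k * 'I_#|T|.+1 := (c x, inord (q x)).

Lemma idx_lt x : (idx x < #|C (c x)|)%N.
Proof. by rewrite /idx cardE index_mem mem_enum inE. Qed.

Lemma q_le x : (q x <= #|T|)%N.
Proof.
apply: leq_trans (leq_div _ _) _; apply: leq_trans (ltnW (idx_lt x)) _; exact: max_card.
Qed.

Lemma dq x : ((dP x).2 : nat) = q x.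
Proof. by rewrite /= inordK // ltnS q_le. Qed.

Lemma dP_proper x y : e x y -> dP x != dP y.
Proof.
move=> exy; have := forallP (forallP cprop x) y; rewrite exy /= => hc.
by apply: contraNneq hc => /(congr1 fst) /= ->.
Qed.

Lemma dP_sub a : [set x | dP x == a] \subset C a.1.
Proof. by apply/subsetP=> x; rewrite !inE => /eqP <-. Qed.

Lemma dP_card a : (#|[set x | dP x == a]| <= s a.1)%N.
Proof.
set X := [set x | dP x == a].
pose g x := Ordinal (ltn_pmod (idx x) (s_pos a.1)).
have hX x : x \in X -> c x = a.1 /\ (idx x %/ s a.1)%N = a.2.
  rewrite inE => /eqP <-; split => //; by rewrite dq.
have ginj : {in X &, injective g}.
  move=> x y hx hy /(congr1 val) /= hm.
  have [cx qx] := hX x hx; have [cy qy] := hX y hy.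
  have hi : idx x = idx y.
    by rewrite (divn_eq (idx x) (s a.1)) (divn_eq (idx y) (s a.1)) hm qx qy.
  move: hi; rewrite /idx cx cy => hi.
  have hx' : x \in enum (C a.1) by rewrite mem_enum inE cx.
  have hy' : y \in enum (C a.1) by rewrite mem_enum inE cy.
  exact: index_inj hx' hy' hi.
rewrite -(card_in_imset ginj); apply: leq_trans (max_card _) _; by rewrite card_ord.
Qed.

Lemma dP_small x : (#|C (c x)| <= s (c x))%N -> ((dP x).2 : nat) = 0%N.
Proof. move=> h; rewrite dq /q divn_small //; exact: leq_trans (idx_lt x) h. Qed.

Lemma dP_img : (#|[set dP x | x : T]| <= \sum_i ((#|C i| + s i - 1) %/ s i))%N.
Proof.
set B := [set p : 'I_k * 'I_#|T|.+1 | (p.2 * s p.1 < #|C p.1|)%N].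
have sub : [set dP x | x : T] \subset B.
  apply/subsetP=> p /imsetP[x _ ->]; rewrite inE dq /=.
  apply: leq_ltn_trans (idx_lt x); rewrite /q {2}(divn_eq (idx x) (s (c x))); exact: leq_addr.
apply: leq_trans (subset_leq_card sub) _.
rewrite -sum1_card big_mkcond /=.
rewrite (eq_bigr (fun p => (fun i (j : 'I_#|T|.+1) => if (j * s i < #|C i|)%N then 1 else 0)%N p.1 p.2)); last by move=> p _; rewrite inE.
rewrite -(pair_bigA _ (fun i (j : 'I_#|T|.+1) => if (j * s i < #|C i|)%N then 1 else 0)%N).
apply: leq_sum => i _.
apply: leq_trans (_ : \sum_(j < #|T|.+1) ((j : nat) < (#|C i| + s i - 1) %/ s i : nat) <= _)%N.
  apply: leq_sum => j _; case: ifP => // h.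
  have -> : ((j : nat) < (#|C i| + s i - 1) %/ s i)%N.
    rewrite leq_divRL ?s_pos // mulSn; have := s_pos i; lia.
  by [].
by rewrite sum_lt geq_minr.
Qed.

End P.

Lemma bigmax_mem (I : finType) (P : pred I) (F : I -> nat) :
  \max_(i | P i) F i = 0%N \/ exists2 i, P i & \max_(i | P i) F i = F i.
Proof.
apply: (big_rec (fun x => x = 0%N \/ exists2 i, P i & x = F i)); first by left.
have mc a b : maxn a b = a \/ maxn a b = b.
  lia.
move=> i x Pi [->|[j Pj ->]].
- by case: (mc (F i) 0%N) => ->; [right; exists i|left].
- by case: (mc (F i) (F j)) => ->; right; [exists i|exists j].
Qed.

Lemma sum_const_ord n K : (\sum_(i < n) K = n * K)%N.
Proof. by rewrite big_const_ord iter_addn_0 mulnC. Qed.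

Lemma mul_div_le d m : (d * (m %/ d) <= m)%N.
Proof. by rewrite mulnC {2}(divn_eq m d) leq_addr. Qed.

Section C.
Variables (T : finType) (e : rel T).

Lemma alpha_set : exists S, indep e S /\ #|S| = alpha e.
Proof.
rewrite /alpha; case: (bigmax_mem _ (fun S : {set T} => indep e S) (fun S => #|S|)) => [->|[S hS ->]]; last by exists S.
exists set0; split; last by rewrite cards0.
by apply/forallP=> x; rewrite inE.
Qed.

Lemma chrom_col : irreflexive e -> exists c : {ffun T -> 'I_(chromatic e)}, proper_coloring e c.
Proof.
move=> irr; rewrite /chromatic.
case: (bigmin_mem _ (fun i : 'I_#|T|.+1 => [exists c : {ffun T -> 'I_i}, proper_coloring e c]) (fun i => nat_of_ord i) #|T|) => [E|[i Pi E]]; rewrite E.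
- exists [ffun x => enum_rank x]; apply/forallP=> x; apply/forallP=> y; apply/implyP=> exy.
  rewrite !ffunE (inj_eq enum_rank_inj); apply: contraTneq exy => ->; by rewrite irr.
- by case/existsP: Pi => c hc; exists c.
Qed.

Lemma sumC k (c : {ffun T -> 'I_k}) : (\sum_(i < k) #|[set x | c x == i]| = #|T|)%N.
Proof.
transitivity (\sum_(i < k) \sum_(x | c x == i) 1)%N.
  by apply: eq_bigr => i _; rewrite sum1dep_card.
have -> : #|T| = (\sum_(x : T) 1)%N by rewrite sum1_card.
by rewrite (partition_big c xpredT).
Qed.

Lemma class_indep k (c : {ffun T -> 'I_k}) (P : {set T}) i :
  proper_coloring e c -> P \subset [set x | c x == i] -> indep e P.
Proof.
move=> pc sub; apply/indepP => x y hx hy; apply/negP => exy.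
have := forallP (forallP pc x) y; rewrite exy /=.
by move: (subsetP sub x hx) (subsetP sub y hy); rewrite !inE => /eqP -> /eqP ->; rewrite eqxx.
Qed.

End C.

Arguments copy_bip {T U e eH P Q}.
Arguments k_bounds {U eH A}.
Arguments chrom_col {T e}.
Arguments sumC {T k}.
Arguments k2_le_k1 {U} eH.
Arguments class_indep {T e k c P i}.
Arguments indepP {V r S}.

Arguments dP {T k} c s x.
Arguments dP_sub {T k} c s a.
Arguments dP_card {T k c s} s_pos a.
Arguments dP_img {T e k c s} s_pos cprop.
Arguments dP_small {T k} c s x _.
Arguments dP_proper {T e k c s} cprop x y _.

Lemma indep_sub (V : finType) (r : rel V) (P Q : {set V}) :
  P \subset Q -> indep r Q -> indep r P.
Proof.
move=> sub /indepP iQ; apply/indepP => x y hx hy; apply: iQ; exact: (subsetP sub).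
Qed.

Section M.
Variables (T U : finType) (e : rel T) (eH : rel U).
Hypothesis eirr : irreflexive e.

Lemma B1 : (2 <= k2 eH)%N ->
  ((k1 eH - 1) * chiH e eH <= #|T| + chromatic e * (k1 eH - 2))%N.
Proof.
move=> hk2; have k12 := k2_le_k1 eH.
have [c cprop] := chrom_col eirr.
have hsum := sumC c.
pose s := fun _ : 'I_(chromatic e) => (k1 eH - 1)%N.
have spos : forall i, (0 < s i)%N by move=> i; rewrite /s; lia.
have hL : (chiH e eH <= #|[set dP c s x | x : T]|)%N.
  apply: L; first exact: dP_proper cprop.
  move=> a b ab; apply/negP => hc.
  have [A [hA hAa hAb]] := copy_bip (class_indep cprop (dP_sub c s a))
                                     (class_indep cprop (dP_sub c s b)) hc.
  have [_ hk1] := k_bounds hA.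
  have := dP_card (c:=c) spos a; have := dP_card (c:=c) spos b; move=> h1 h2; have e1 : s a.1 = (k1 eH - 1)%N by []; have e2 : s b.1 = (k1 eH - 1)%N by []. have hm : (maxn #|A| #|~: A| <= k1 eH - 1)%N by rewrite geq_max -{1}e2 -e1 (leq_trans hAa h2) (leq_trans hAb h1). lia.
have hI := dP_img spos cprop.
apply: leq_trans (leq_mul (leqnn _) (leq_trans hL hI)) _.
rewrite big_distrr /= -hsum -sum_const_ord -big_split /=.
apply: leq_sum => i _; rewrite /s; apply: leq_trans (mul_div_le _ _) _; lia.
Qed.

Lemma B2 : (2 <= k2 eH)%N -> (0 < chromatic e)%N ->
  exists cm, ((k2 eH - 1) * chiH e eH + cm + (k2 eH - 2) <= (k2 eH - 1) + #|T| + chromatic e * (k2 eH - 2))%N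
     /\ (#|T| <= chromatic e * cm)%N.
Proof.
move=> hk2 hchi.
have [c cprop] := chrom_col eirr.
have hsum := sumC c.
pose i0 : 'I_(chromatic e) := Ordinal hchi.
case: (@arg_maxnP _ i0 xpredT (fun i => #|[set x | c x == i]|) erefl) => m _ hm.
exists #|[set x | c x == m]|; split; last first.
  rewrite -hsum -sum_const_ord; apply: leq_sum => i _; exact: hm.
pose s := fun i : 'I_(chromatic e) => if i == m then #|T|.+1 else (k2 eH - 1)%N.
have spos : forall i, (0 < s i)%N by move=> i; rewrite /s; case: ifP => _; lia.
have sm : s m = #|T|.+1 by rewrite /s eqxx.
have so : forall i, i != m -> s i = (k2 eH - 1)%N by move=> i hi; rewrite /s (negbTE hi).
clearbody s.
have hL : (chiH e eH <= #|[set dP c s x | x : T]|)%N.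
  apply: L; first exact: dP_proper cprop.
  move=> [a1 a2] [b1 b2] ab; apply/negP => hc.
  have [A [hA hAa hAb]] := copy_bip (class_indep cprop (dP_sub c s (a1, a2)))
                                     (class_indep cprop (dP_sub c s (b1, b2))) hc.
  have [hk2' _] := k_bounds hA.
  have ca := dP_card (c:=c) spos (a1, a2); have cb := dP_card (c:=c) spos (b1, b2).
  case: (eqVneq a1 m) => [a1m|a1m]; last first.
    have es := so _ a1m.
    have hh : (minn #|A| #|~: A| <= k2 eH - 1)%N by rewrite geq_min -es (leq_trans hAa ca).
    lia.
  case: (eqVneq b1 m) => [b1m|b1m]; last first.
    have es := so _ b1m.
    have hh : (minn #|A| #|~: A| <= k2 eH - 1)%N by rewrite geq_min -es (leq_trans hAb cb) orbT.
    lia.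
  subst a1 b1.
  have z : forall a2 : 'I_#|T|.+1, (0 < #|[set x | dP c s x == (m, a2)]|)%N -> (a2 : nat) = 0%N.
    move=> a2' /card_gt0P [x]; rewrite inE => /eqP hx.
    have cx : c x = m by move: (congr1 fst hx).
    have hs : (#|[set y | c y == c x]| <= s (c x))%N.
      by rewrite cx sm; apply: leq_trans (max_card _) (leqnSn _).
    by have := dP_small c s x hs; rewrite hx.
  have ea : (a2 : nat) = 0%N.
    by apply: z; apply: leq_trans (ltnW hk2) (leq_trans hk2' (leq_trans (geq_minl _ _) hAa)).
  have eb : (b2 : nat) = 0%N.
    by apply: z; apply: leq_trans (ltnW hk2) (leq_trans hk2' (leq_trans (geq_minr _ _) hAb)).
  have e22 : a2 = b2 by apply: ord_inj; rewrite ea eb.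
  by rewrite e22 eqxx in ab.  
have hI := dP_img spos cprop.
have hC := leq_trans hL hI.
rewrite (bigD1 m) //= in hC.
have Mm : ((#|[set x | c x == m]| + s m - 1) %/ s m <= 1)%N.
  rewrite sm -ltnS ltn_divLR //; have h1 : (#|[set x | c x == m]| <= #|T|)%N := max_card _; lia.
have hS : ((k2 eH - 1) * (\sum_(i < chromatic e | i != m) ((#|[set x | c x == i]| + s i - 1) %/ s i))
     <= \sum_(i < chromatic e | i != m) (#|[set x | c x == i]| + (k2 eH - 2)))%N.
  rewrite big_distrr /=; apply: leq_sum => i him.
  rewrite so //; apply: leq_trans (mul_div_le _ _) _; lia.
have hT : (#|T| + chromatic e * (k2 eH - 2) = (#|[set x | c x == m]| + (k2 eH - 2)) +
     \sum_(i < chromatic e | i != m) (#|[set x | c x == i]| + (k2 eH - 2)))%N.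
  by rewrite -hsum -sum_const_ord -big_split /= (bigD1 m).
have hmul := leq_mul (leqnn (k2 eH - 1)) hC.
have hMm := leq_mul (leqnn (k2 eH - 1)) Mm.
rewrite mulnDr in hmul.
have key : forall K X Mt S1 S2 n0 ch J Cm : nat, (K*X <= K*Mt + K*S1 -> K*Mt <= K*1 -> K*S1 <= S2 -> n0 + ch*J = Cm + J + S2 -> K*X + Cm + J <= K + n0 + ch*J)%N.
  move=> K X Mt S1 S2 n0 ch J Cm h1 h2 h3 h4; nia.
exact: key hmul hMm hS hT.
Qed.

Lemma B3 : (chiH e eH <= #|T| - alpha e + 1)%N /\ (alpha e <= #|T|)%N
  \/ (k2 eH != 2%N).
Proof.
case: (eqVneq (k2 eH) 2%N) => hk2; last by right.
left.
have [S [iS cS]] := @alpha_set T e.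
split; last by rewrite -cS max_card.
pose d x := if x \in S then None else Some x.
have hL : (chiH e eH <= #|[set d x | x : T]|)%N.
  apply: L.
  - move=> x y exy; rewrite /d.
    case: ifP => hx; case: ifP => hy //.
    + by move/indepP: iS => /(_ x y hx hy); rewrite exy.
    + apply/eqP => -[exy']; move: exy; rewrite exy' eirr //.
  - have ind : forall a, indep e [set x | d x == a].
      case=> [z|].
      + apply: (@indep_sub _ _ _ [set z]).
          by apply/subsetP=> x; rewrite !inE /d; case: ifP => // _ /eqP [->].
        by apply/indepP => x y; rewrite !inE => /eqP -> /eqP ->; rewrite eirr.
      + apply: indep_sub iS; apply/subsetP=> x; rewrite !inE /d; by case: ifP.
    have sm : forall z, (#|[set x | d x == Some z]| <= 1)%N.
      move=> z; rewrite -(cards1 z); apply: subset_leq_card.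
      by apply/subsetP=> x; rewrite !inE /d; case: ifP => // _ /eqP [->].
    move=> a b ab; apply/negP => hc.
    have [A [hA hAa hAb]] := copy_bip (ind a) (ind b) hc.
    have [hk2' _] := k_bounds hA.
    move: ab hc hAa hAb; case: a b => [z|] [w|] //= ab hc hAa hAb.
    + by have := leq_trans hk2' (leq_trans (geq_minl _ _) (leq_trans hAa (sm z))); rewrite hk2.
    + by have := leq_trans hk2' (leq_trans (geq_minl _ _) (leq_trans hAa (sm z))); rewrite hk2.
    + by have := leq_trans hk2' (leq_trans (geq_minr _ _) (leq_trans hAb (sm w))); rewrite hk2.
apply: leq_trans hL _.
have sub : [set d x | x : T] \subset None |: [set Some x | x in ~: S].
  apply/subsetP => p /imsetP [x _ ->]; rewrite !inE /d.
  case: ifP => hx //=; apply: imset_f; by rewrite inE hx.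
apply: leq_trans (subset_leq_card sub) _.
rewrite cardsU1 card_imset; last by move=> ? ? [].
have := cardsC S; rewrite cS => h1; case: (None \notin _); lia.
Qed.

End M.
Local Open Scope ring_scope.

Lemma R1 (c n x kk : nat) : ((kk+1) * c <= n + x * kk)%N ->
  (c%:R : rat) <= n%:R / ((kk+2)%:R - 1) + ((kk+2)%:R - 2)/((kk+2)%:R - 1) * x%:R.
Proof.
move=> h.
have e1 : (kk+2)%:R - 1 = kk%:R + 1 :> rat by rewrite !natrD; ring.
have e2 : (kk+2)%:R - 2 = kk%:R :> rat by rewrite !natrD; ring.
have kp : 0 < kk%:R + 1 :> rat by rewrite natr1 ltr0n.
have kn : kk%:R + 1 != 0 :> rat by rewrite gt_eqF.
rewrite e1 e2.
have -> : n%:R / (kk%:R + 1) + kk%:R / (kk%:R + 1) * x%:R = (n%:R + kk%:R * x%:R) / (kk%:R+1) :> rat.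
  by field.
rewrite ler_pdivlMr //.
have h' : ((kk%:R + 1) * c%:R <= n%:R + x%:R * kk%:R :> rat).
  by rewrite natr1 -!natrM -natrD ler_nat -addn1.
nra.
Qed.

Lemma R2 (c n x kk cm : nat) : (1 <= x)%N ->
  ((kk+1) * c + cm + kk <= (kk+1) + n + x * kk)%N -> (n <= x * cm)%N ->
  (c%:R : rat) <= n%:R / ((kk+2)%:R - 1) * (1 - 1 / x%:R) + ((kk+2)%:R - 2)/((kk+2)%:R - 1) * (x%:R - 1) + 1.
Proof.
move=> x1 h0 hn.
have h : ((kk+1) * c + cm <= (kk+1) + n + x.-1 * kk)%N.
  have ex' : (x * kk = x.-1 * kk + kk)%N by rewrite -{1}(prednK x1) mulSn addnC.
  lia.
have e1 : (kk+2)%:R - 1 = kk%:R + 1 :> rat by rewrite !natrD; ring.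
have e2 : (kk+2)%:R - 2 = kk%:R :> rat by rewrite !natrD; ring.
have kp : 0 < kk%:R + 1 :> rat by rewrite natr1 ltr0n.
have kn : kk%:R + 1 != 0 :> rat by rewrite gt_eqF.
have xp : 0 < x%:R :> rat by rewrite ltr0n.
have xn : x%:R != 0 :> rat by rewrite gt_eqF.
have ex : x.-1%:R = x%:R - 1 :> rat by rewrite -{2}(prednK x1) -natr1; ring.
rewrite e1 e2.
have hy : n%:R / x%:R <= cm%:R :> rat.
  rewrite ler_pdivrMr // mulrC -natrM ler_nat. exact: hn.
have -> : n%:R / (kk%:R + 1) * (1 - 1 / x%:R) + kk%:R / (kk%:R + 1) * (x%:R - 1) + 1
   = (n%:R - n%:R / x%:R + kk%:R * (x%:R - 1) + (kk%:R + 1)) / (kk%:R + 1) :> rat.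
  by field; rewrite kn xn.
rewrite ler_pdivlMr //.
have h' : (kk%:R + 1) * c%:R + cm%:R <= (kk%:R + 1) + n%:R + (x%:R - 1) * kk%:R :> rat.
  by rewrite -ex natr1 -!natrM -!natrD ler_nat -addn1.
move: hy; set y := n%:R / x%:R => hy.
nra.
Qed.

Lemma R0 (kk : nat) : (0 : rat) <= 0%:R / ((kk+2)%:R - 1) * (1 - 1 / 0%:R) + ((kk+2)%:R - 2)/((kk+2)%:R - 1) * (0%:R - 1) + 1.
Proof.
have e1 : (kk+2)%:R - 1 = kk%:R + 1 :> rat by rewrite !natrD; ring.
have e2 : (kk+2)%:R - 2 = kk%:R :> rat by rewrite !natrD; ring.
have kp : 0 < kk%:R + 1 :> rat by rewrite natr1 ltr0n.
have kn : kk%:R + 1 != 0 :> rat by rewrite gt_eqF.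
rewrite e1 e2 mul0r mul0r add0r.
have -> : kk%:R / (kk%:R + 1) * (0%:R - 1) + 1 = 1 / (kk%:R + 1) :> rat by field.
by rewrite divr_ge0 // ltW.
Qed.

Theorem proposition1 (T U : finType) (e : rel T) (eH : rel U) :
  simple_graph e -> simple_graph eH -> bipartite eH ->
  (2 <= k2 eH)%N ->
  let n : rat := (#|T|)%:R in
  let chi : rat := (chromatic e)%:R in
  let K1 : rat := (k1 eH)%:R in
  let K2 : rat := (k2 eH)%:R in
  let b1 : rat := n / (K1 - 1) + (K1 - 2) / (K1 - 1) * chi in
  ((3 <= k2 eH)%N ->
     ((chiH e eH)%:R : rat) <=
       Num.min b1 (n / (K2 - 1) * (1 - 1 / chi) + (K2 - 2) / (K2 - 1) * (chi - 1) + 1)) /\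
  (k2 eH = 2%N ->
     ((chiH e eH)%:R : rat) <= Num.min b1 (n - (alpha e)%:R + 1)).
Proof.
move=> [esym eirr] _ _ hk2; cbv zeta.
have k12 := k2_le_k1 eH.
have hB1 := @B1 T U e eH eirr hk2.
set kk := (k1 eH - 2)%N in hB1.
have ek1 : k1 eH = (kk + 2)%N by rewrite /kk; lia.
have ek1' : (k1 eH - 1 = kk + 1)%N by rewrite /kk; lia.
rewrite ek1' in hB1.
have hb1 : ((chiH e eH)%:R : rat) <= (#|T|)%:R / ((k1 eH)%:R - 1) + ((k1 eH)%:R - 2) / ((k1 eH)%:R - 1) * (chromatic e)%:R.
  by rewrite ek1; apply: R1.
set kk2 := (k2 eH - 2)%N.
have ek2 : k2 eH = (kk2 + 2)%N by rewrite /kk2; lia.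
split => h; rewrite le_min hb1 /=.
- case: (posnP (chromatic e)) => hchi.
  + have [c _] := chrom_col eirr.
    have hT : #|T| = 0%N.
      apply: eq_card0 => x; by case: (c x) => i; rewrite hchi.
    have hc0 : chiH e eH = 0%N by have := @chiH_leT T U e eH; rewrite hT; lia.
    rewrite hc0 hT hchi ek2; exact: R0.
  + have [cm [h1 h2]] := @B2 T U e eH eirr hk2 hchi.
    have ek2' : (k2 eH - 1 = kk2 + 1)%N by rewrite /kk2; lia.
    rewrite ek2' -/kk2 in h1.
    by rewrite ek2; apply: (@R2 _ _ _ _ _ hchi h1 h2).
- case: (@B3 T U e eH eirr) => [[h1 h2]|]; last by rewrite h.
  rewrite -(ler_nat rat) natrD natrB // in h1.
Qed.
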